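(* Let $n\ge 3$ and consider the representations $\zeta'_i:\mathrm{TVB}_n\to\mathrm{GL}_{n+1}(\mathbb{C})$, $1\le i\le 7$, given by $\zeta'_i(\sigma_k)=L_k(S)$, $\zeta'_i(\rho_k)=L_k(R)$ ($1\le k\le n-1$), $\zeta'_i(\gamma_j)=L_j(G)$ ($1\le j\le n$), where: (1) $\zeta'_1$: $S=\begin{pmatrix}0&b\\ c&0\end{pmatrix}$, $R=\begin{pmatrix}0&-\frac{\sqrt b}{\sqrt c}\\ -\frac{\sqrt c}{\sqrt b}&0\end{pmatrix}$, $G=\mathrm{diag}(-1,1)$; (2) $\zeta'_2$: $S=\begin{pmatrix}0&b\\ c&0\end{pmatrix}$, $R=\begin{pmatrix}0&\frac{\sqrt b}{\sqrt c}\\ \frac{\sqrt c}{\sqrt b}&0\end{pmatrix}$, $G=\mathrm{diag}(-1,1)$; (3) $\zeta'_3$: $S,R$ as in (1), $G=I_2$; (4) $\zeta'_4$: $S,R$ as in (2), $G=I_2$; (5) $\zeta'_5$: $S=I_2$, $R=\begin{pmatrix}0&x\\ \frac1x&0\end{pmatrix}$, $G=\mathrm{diag}(-1,1)$; (6) $\zeta'_6$: $S=I_2$, $R=\begin{pmatrix}0&x\\ \frac1x&0\end{pmatrix}$, $G=I_2$; (7) $\zeta'_7$: $S=R=G=I_2$; with $b,c,x\in\mathbb{C}\setminus\{0\}$ and $\sqrt b,\sqrt c$ square roots of $b,c$. Then every $\zeta'_i$ is reducible to degree $n$: the line spanned by the last standard basis vector $e_{n+1}$ is invariant under all $\zeta'_i(g)$,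 and the subspace $\mathrm{span}(e_1,\dots,e_n)$ is invariant as well. Furthermore, for $1\le i\le 4$, if $bc\neq 1$ then the $n$-dimensional subrepresentation of $\zeta'_i$ on $\mathrm{span}(e_1,\dots,e_n)$ is irreducible (i.e. $\zeta'_i$ is not further reducible).
   Context: For $n\ge 2$, the twisted virtual braid group $\mathrm{TVB}_n$ is the group with generators $\sigma_1,\dots,\sigma_{n-1}$, $\rho_1,\dots,\rho_{n-1}$, $\gamma_1,\dots,\gamma_n$ and defining relations: $\sigma_i\sigma_{i+1}\sigma_i=\sigma_{i+1}\sigma_i\sigma_{i+1}$; $\sigma_i\sigma_j=\sigma_j\sigma_i$ ($|i-j|\ge2$); $\rho_i^2=1$; $\rho_i\rho_j=\rho_j\rho_i$ ($|i-j|\ge 2$); $\rho_i\rho_{i+1}\rho_i=\rho_{i+1}\rho_i\rho_{i+1}$; $\sigma_i\rho_j=\rho_j\sigma_i$ ($|i-j|\ge 2$); $\rho_i\rho_{i+1}\sigma_i=\sigma_{i+1}\rho_i\rho_{i+1}$; $\gamma_i^2=1$; $\gamma_i\gamma_j=\gamma_j\gamma_i$; $\gamma_j\rho_i=\rho_i\gamma_j$ and $\gamma_j\sigma_i=\sigma_i\gamma_j$ ($|i-j|\ge 2$); $\rho_i\gamma_i=\gamma_{i+1}\rho_i$; $\rho_i\sigma_i\rho_i=\gamma_{i+1}\gamma_i\sigma_i\gamma_i\gamma_{i+1}$. For a $2\times2$ matrix $M$ and $1\le i\le n$, $L_i(M)$ denotes the $(n+1)\times(n+1)$ block-diagonal matrix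 $\mathrm{diag}(I_{i-1},M,I_{n-i})$. A representation on $V$ is irreducible if $V$ has no nonzero proper subspace invariant under all the representing matrices. *)

(* Defs.v *)
(* The field C of complex numbers is modelled as
   [complex R] = R[i] for an arbitrary [R : realType] (a complete
   archimedean ordered field, i.e. a copy of the reals). *)
From HB Require Import structures.
From mathcomp Require Import all_boot all_order all_algebra.
From mathcomp Require Import reals.
From mathcomp.real_closed Require Import complex.
Set Implicit Arguments. Unset Strict Implicit. Unset Printing Implicit Defensive.
Import Order.TTheory GRing.Theory Num.Theory.
Local Open Scope ring_scope.

(* L_k(M) = diag(I_{k-1}, M, I_{n-k}) as an (n+1)x(n+1) matrix, 1 <= k <= n.
   With 0-based indices, the block M sits on rows/columns k-1 and k. *)
Definition Lmx {F : nzRingType} (n k : nat) (M : 'M[F]_2) : 'M[F]_(n.+1) :=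
  \matrix_(i < n.+1, j < n.+1)
    if [&& (k.-1 <= i)%N, (i <= k)%N, (k.-1 <= j)%N & (j <= k)%N]
    then M (inord (i - k.-1)) (inord (j - k.-1))
    else (i == j)%:R.

Definition tvb_gen_images {F : nzRingType} (n : nat) (S R G : 'M[F]_2)
  (M : 'M[F]_(n.+1)) : Prop :=
  (exists k, [/\ (1 <= k)%N, (k <= n.-1)%N & (M = Lmx n k S \/ M = Lmx n k R)])
  \/ (exists j, [/\ (1 <= j)%N, (j <= n)%N & M = Lmx n j G]).

Inductive gen_by {F : fieldType} (N : nat) (P : 'M[F]_N.+1 -> Prop)
  : 'M[F]_N.+1 -> Prop :=
| gen_by1 : gen_by P 1%:M
| gen_by_mul g M : P g -> gen_by P M -> gen_by P (g *m M)
| gen_by_inv g M : P g -> gen_by P M -> gen_by P (invmx g *m M).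

(* A subspace of F^N (column vectors) is encoded by a matrix V whose rows
   (transposed) span it.  It is mx_invariant under the linear map v |-> M v
   iff every row v of V satisfies (M v^T)^T = v M^T in the row space of V. *)
Definition mx_invariant {F : fieldType} (m N : nat) (V : 'M[F]_(m, N)) (M : 'M[F]_N) : bool :=
  (V *m M^T <= V)%MS.

Definition zeta_data {F : fieldType} (i : nat) (b c x sb sc : F)
  : 'M[F]_2 * 'M[F]_2 * 'M[F]_2 :=
  let S0 : 'M[F]_2 := \matrix_(p < 2, q < 2)
      (if (p == 0) && (q == 1) then b else if (p == 1) && (q == 0) then c else 0) in
  let R1 : 'M[F]_2 := \matrix_(p < 2, q < 2)
      (if (p == 0) && (q == 1) then - (sb / sc)
       else if (p == 1) && (q == 0) then - (sc / sb) else 0) in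
  let R2 : 'M[F]_2 := \matrix_(p < 2, q < 2)
      (if (p == 0) && (q == 1) then sb / sc
       else if (p == 1) && (q == 0) then sc / sb else 0) in
  let Rx : 'M[F]_2 := \matrix_(p < 2, q < 2)
      (if (p == 0) && (q == 1) then x
       else if (p == 1) && (q == 0) then x^-1 else 0) in
  let Gd : 'M[F]_2 := \matrix_(p < 2, q < 2)
      (if p == q then (if p == 0 then -1 else 1) else 0) in
  let I2 : 'M[F]_2 := 1%:M in
  match i with
  | 1 => (S0, R1, Gd)
  | 2 => (S0, R2, Gd)
  | 3 => (S0, R1, I2)
  | 4 => (S0, R2, I2)
  | 5 => (I2, Rx, Gd)
  | 6 => (I2, Rx, I2)
  | _ => (I2, I2, I2)
  end.

Definition zeta_image {F : fieldType} (n i : nat) (b c x sb sc : F)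
  : 'M[F]_(n.+1) -> Prop :=
  let '(Sm, Rm, Gm) := zeta_data i b c x sb sc in
  @gen_by F n (@tvb_gen_images F n Sm Rm Gm).

Arguments zeta_image {F} n i b c x sb sc _.
Arguments tvb_gen_images {F} n S R G M.
Arguments Lmx {F} n k M.

(* Main.v *)
Require Import Defs.
From HB Require Import structures.
From mathcomp Require Import all_boot all_order all_algebra.
From mathcomp Require Import reals.
From mathcomp.real_closed Require Import complex.
From mathcomp Require Import zify ring.
Import Order.TTheory GRing.Theory Num.Theory.
Local Open Scope ring_scope.
Set Implicit Arguments. Unset Strict Implicit.

Lemma inord0_2 : (inord 0 : 'I_2) = 0. Proof. by apply: val_inj; rewrite /= inordK. Qed.
Lemma inord1_2 : (inord 1 : 'I_2) = 1. Proof. by apply: val_inj; rewrite /= inordK. Qed.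

Lemma sum2 (F : fieldType) (m : nat) (G : 'I_m -> F) (a0 a1 : 'I_m) : a0 != a1 ->
  (forall l, l != a0 -> l != a1 -> G l = 0) -> \sum_l G l = G a0 + G a1.
Proof.
move=> ne H; rewrite (bigD1 a0) //= (bigD1 a1) /=; last by rewrite eq_sym.
rewrite big1 ?addr0 // => l /andP[h1 h0]; exact: H.
Qed.

Lemma sum1 (F : fieldType) m (G : 'I_m -> F) a : (forall l, l != a -> G l = 0) -> \sum_l G l = G a.
Proof. move=> H; rewrite (bigD1 a) //= big1 ?addr0 // => l; exact: H. Qed.

Lemma LmxM (F : fieldType) n k (A B : 'M[F]_2) : (1 <= k <= n)%N ->
  Lmx n k A *m Lmx n k B = Lmx n k (A *m B).
Proof.
move=> /andP[k1 kn]; apply/matrixP => i j.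
rewrite !mxE.
have va0 : ((inord k.-1 : 'I_n.+1) : nat) = k.-1 by rewrite inordK //; lia.
have va1 : ((inord k : 'I_n.+1) : nat) = k by rewrite inordK //; lia.
case/orP: (orbN (k.-1 <= i <= k)%N) => Hi.
- rewrite (@sum2 _ _ _ (inord k.-1) (inord k)); first last.
  + move=> l; rewrite -!val_eqE /= va0 va1 => h0 h1.
    rewrite !mxE; have -> : [&& (k.-1 <= i)%N, (i <= k)%N, (k.-1 <= l)%N & (l <= k)%N] = false by lia.
    have -> : (i == l) = false by rewrite -val_eqE /=; lia.
    by rewrite mul0r.
  + by rewrite -val_eqE /= va0 va1; lia.
  rewrite !mxE va0 va1.
  have -> : [&& (k.-1 <= i)%N, (i <= k)%N, (k.-1 <= k.-1)%N & (k.-1 <= k)%N] by lia.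
  have -> : [&& (k.-1 <= i)%N, (i <= k)%N, (k.-1 <= k)%N & (k <= k)%N] by lia.
  have -> : (k.-1 - k.-1 = 0)%N by lia.
  have -> : (k - k.-1 = 1)%N by lia.
  rewrite inord0_2 inord1_2.
  case/orP: (orbN (k.-1 <= j <= k)%N) => Hj.
  + have -> : [&& (k.-1 <= i)%N, (i <= k)%N, (k.-1 <= j)%N & (j <= k)%N] by lia.
    have -> : [&& (k.-1 <= k.-1)%N, (k.-1 <= k)%N, (k.-1 <= j)%N & (j <= k)%N] by lia.
    have -> : [&& (k.-1 <= k)%N, (k <= k)%N, (k.-1 <= j)%N & (j <= k)%N] by lia.
    rewrite !big_ord_recl big_ord0 addr0; have -> : (lift ord0 ord0 : 'I_2) = 1 by exact: val_inj. by [].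
  + have -> : [&& (k.-1 <= i)%N, (i <= k)%N, (k.-1 <= j)%N & (j <= k)%N] = false by lia.
    have -> : [&& (k.-1 <= k.-1)%N, (k.-1 <= k)%N, (k.-1 <= j)%N & (j <= k)%N] = false by lia.
    have -> : [&& (k.-1 <= k)%N, (k <= k)%N, (k.-1 <= j)%N & (j <= k)%N] = false by lia.
    have -> : ((inord k.-1 : 'I_n.+1) == j) = false by rewrite -val_eqE /= va0; lia.
    have -> : ((inord k : 'I_n.+1) == j) = false by rewrite -val_eqE /= va1; lia.
    have -> : (i == j) = false by rewrite -val_eqE /=; lia.
    by rewrite !mulr0 addr0.
- rewrite (@sum1 _ _ _ i); last first.
    move=> l hl; rewrite !mxE.
    have -> : [&& (k.-1 <= i)%N, (i <= k)%N, (k.-1 <= l)%N & (l <= k)%N] = false by lia.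
    by rewrite eq_sym (negbTE hl) mul0r.
  rewrite !mxE.
  have -> : [&& (k.-1 <= i)%N, (i <= k)%N, (k.-1 <= i)%N & (i <= k)%N] = false by lia.
  have -> : [&& (k.-1 <= i)%N, (i <= k)%N, (k.-1 <= j)%N & (j <= k)%N] = false by lia.
  by rewrite eqxx mul1r.
Qed.

Lemma inv_mul (F : fieldType) m N (V : 'M[F]_(m, N)) g M :
  mx_invariant V g -> mx_invariant V M -> mx_invariant V (g *m M).
Proof.
rewrite /mx_invariant trmx_mul mulmxA => Hg HM.
exact: submx_trans (submxMr _ HM) Hg.
Qed.

Lemma inv_inv (F : fieldType) m N (V : 'M[F]_(m, N)) g :
  mx_invariant V g -> mx_invariant V (invmx g).
Proof.
rewrite /mx_invariant => Hg.
have [gU|gN] := boolP (g \in unitmx); last by rewrite invmx_out.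
have gtU : g^T \in unitmx by rewrite unitmx_tr.
have : (V <= V *m g^T)%MS.
  have := mxrank_leqif_sup Hg; rewrite mxrankMfree ?row_free_unit //.
  by move=> [_ <-].
move/(submxMr (invmx g^T)); rewrite -[X in (_ <= X)%MS -> _]mulmxA mulmxV // mulmx1 trmx_inv; exact.
Qed.

Lemma gen_inv (F : fieldType) m N (V : 'M[F]_(m, N.+1)) (P : 'M[F]_N.+1 -> Prop) :
  (forall g, P g -> mx_invariant V g) -> forall M, gen_by P M -> mx_invariant V M.
Proof.
move=> HP M; elim=> [|g M' Pg _ IH|g M' Pg _ IH].
- by rewrite /mx_invariant trmx1 mulmx1.
- exact: inv_mul (HP _ Pg) IH.
- exact: inv_mul (inv_inv (HP _ Pg)) IH.
Qed.

Definition fixn (F : fieldType) n (M : 'M[F]_n.+1) :=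
  (forall i, M i ord_max = (i == ord_max)%:R) /\ (forall j, j != ord_max -> M ord_max j = 0).

Lemma fixn_last (F : fieldType) n (M : 'M[F]_n.+1) : fixn M ->
  mx_invariant (delta_mx 0 ord_max : 'rV[F]_(n.+1)) M.
Proof.
move=> [H1 _]; rewrite /mx_invariant -rowE.
suff -> : row ord_max M^T = delta_mx 0 ord_max by [].
by apply/rowP => l; rewrite !mxE H1 eq_sym.
Qed.

Lemma fixn_pid (F : fieldType) n (M : 'M[F]_n.+1) : fixn M ->
  mx_invariant (pid_mx n : 'M[F]_(n.+1)) M.
Proof.
move=> [_ H2]; rewrite /mx_invariant.
set A := pid_mx n *m M^T.
suff -> : A = A *m pid_mx n by apply: submxMl.
apply/matrixP => i j; rewrite [RHS]mxE (@sum1 _ _ _ j); last first.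
  move=> l hl; rewrite [pid_mx n l j]mxE.
  have -> : (l == j :> nat) = false by rewrite val_eqE (negbTE hl).
  by rewrite mulr0.
rewrite [pid_mx n j j]mxE eqxx /=.
case: (ltnP j n) => hj; first by rewrite mulr1.
rewrite mulr0 /A mxE (@sum1 _ _ _ i); last first.
  move=> l hl; rewrite [pid_mx n i l]mxE.
  have -> : (i == l :> nat) = false by rewrite val_eqE eq_sym (negbTE hl).
  by rewrite mul0r.
rewrite [pid_mx n i i]mxE eqxx /=.
case: (ltnP i n) => hi; last by rewrite mul0r.
have -> : j = ord_max by apply: val_inj => /=; have := ltn_ord j; lia.
rewrite mxE H2 ?mulr0 // -val_eqE /=; lia.
Qed.

Lemma fixn_Lmx (F : fieldType) n k (X : 'M[F]_2) : (1 <= k)%N -> (k <= n.-1)%N ->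
  fixn (Lmx n k X).
Proof.
move=> k1 kn; split.
- move=> i; rewrite mxE /=.
  by have -> : [&& (k.-1 <= i)%N, (i <= k)%N, (k.-1 <= n)%N & (n <= k)%N] = false by lia.
- move=> j hj; rewrite mxE /=.
  have -> : [&& (k.-1 <= n)%N, (n <= k)%N, (k.-1 <= j)%N & (j <= k)%N] = false by lia.
  by rewrite eq_sym (negbTE hj).
Qed.

Lemma fixn_LmxG (F : fieldType) n k (G : 'M[F]_2) : (1 <= k)%N -> (k <= n)%N ->
  G 0 1 = 0 -> G 1 0 = 0 -> G 1 1 = 1 -> fixn (Lmx n k G).
Proof.
move=> k1 kn G01 G10 G11; split.
- move=> i; rewrite mxE /=.
  case/orP: (orbN (k < n)%N) => hk.
    by have -> : [&& (k.-1 <= i)%N, (i <= k)%N, (k.-1 <= n)%N & (n <= k)%N] = false by lia.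
  case/orP: (orbN (k.-1 <= i)%N) => hi.
    have -> : [&& (k.-1 <= i)%N, (i <= k)%N, (k.-1 <= n)%N & (n <= k)%N] by have := ltn_ord i; lia.
    have -> : (n - k.-1 = 1)%N by lia.
    rewrite inord1_2.
    case/orP: (orbN (i == k.-1 :> nat)) => /eqP hik.
      have -> : (i - k.-1 = 0)%N by lia.
      by rewrite inord0_2 G01; have -> : (i == ord_max) = false by rewrite -val_eqE /=; lia.
    have -> : (i - k.-1 = 1)%N by have := ltn_ord i; lia.
    by rewrite inord1_2 G11; have -> : (i == ord_max) by rewrite -val_eqE /=; have := ltn_ord i; lia.
  by have -> : [&& (k.-1 <= i)%N, (i <= k)%N, (k.-1 <= n)%N & (n <= k)%N] = false by lia.
- move=> j hj; rewrite mxE /=.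
  have hj' : (j < n)%N by move: hj; rewrite -val_eqE /=; have := ltn_ord j; lia.
  case/orP: (orbN (k < n)%N) => hk.
    have -> : [&& (k.-1 <= n)%N, (n <= k)%N, (k.-1 <= j)%N & (j <= k)%N] = false by lia.
    by rewrite eq_sym (negbTE hj).
  case/orP: (orbN (j == k.-1 :> nat)) => /eqP hjk.
    have -> : [&& (k.-1 <= n)%N, (n <= k)%N, (k.-1 <= j)%N & (j <= k)%N] by lia.
    have -> : (n - k.-1 = 1)%N by lia.
    have -> : (j - k.-1 = 0)%N by lia.
    by rewrite inord1_2 inord0_2 G10.
  have -> : [&& (k.-1 <= n)%N, (n <= k)%N, (k.-1 <= j)%N & (j <= k)%N] = false by lia.
  by rewrite eq_sym (negbTE hj).
Qed.

Lemma part1 (F : fieldType) n (S R G : 'M[F]_2) : (1 <= n)%N ->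
  G 0 1 = 0 -> G 1 0 = 0 -> G 1 1 = 1 ->
  forall M, gen_by (tvb_gen_images n S R G) M ->
     mx_invariant (delta_mx 0 ord_max : 'rV[F]_(n.+1)) M
     /\ mx_invariant (pid_mx n : 'M[F]_(n.+1)) M.
Proof.
move=> n1 G01 G10 G11 M HM.
have Hf : forall g, tvb_gen_images n S R G g -> fixn g.
  move=> g [[k [k1 kn [->|->]]]|[j [j1 jn ->]]].
  - exact: fixn_Lmx.
  - exact: fixn_Lmx.
  - exact: fixn_LmxG.
split; apply: (gen_inv _ HM) => g Hg.
- exact: fixn_last (Hf _ Hg).
- exact: fixn_pid (Hf _ Hg).
Qed.

Ltac nat_cases := repeat (match goal with
 | |- context [ (?x <= ?y)%N ] => let E := fresh "E" in case E: (x <= y)%N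
 | |- context [ ?x == ?y ] => let T := type of x in unify T nat; let E := fresh "E" in case E: (x == y)
 end; try (exfalso; lia)).

Lemma inord2_eq x y : (x < 2)%N -> (y < 2)%N -> (inord x == inord y :> 'I_2) = (x == y).
Proof. by move=> hx hy; rewrite -val_eqE /= !inordK. Qed.

Lemma ord_eq_nat n (i j : 'I_n) : (i == j) = (i == j :> nat).
Proof. by rewrite val_eqE. Qed.

Lemma Lmx_scalar (F : fieldType) n k (a : F) : (1 <= k <= n)%N ->
  Lmx n k a%:M = 1%:M + (a - 1) *: (delta_mx (inord k.-1) (inord k.-1) + delta_mx (inord k) (inord k)).
Proof.
move=> /andP[k1 kn]; apply/matrixP => i j.
have va0 : ((inord k.-1 : 'I_n.+1) : nat) = k.-1 by rewrite inordK //; lia.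
have va1 : ((inord k : 'I_n.+1) : nat) = k by rewrite inordK //; lia.
rewrite !mxE !ord_eq_nat va0 va1.
case/orP: (orbN [&& (k.-1 <= i)%N, (i <= k)%N, (k.-1 <= j)%N & (j <= k)%N]) => hb.
  rewrite hb !inordK; try lia.
  nat_cases; rewrite /=; ring.
- rewrite (negbTE hb).
  nat_cases; rewrite /=; ring.
Qed.

Lemma trmx_Lmx (F : fieldType) n k (X : 'M[F]_2) : (Lmx n k X)^T = Lmx n k X^T.
Proof.
apply/matrixP => i j; rewrite !mxE.
by case: (k.-1 <= i)%N; case: (i <= k)%N; case: (k.-1 <= j)%N; case: (j <= k)%N => //=; rewrite eq_sym.
Qed.

Lemma inord_neq n a b : (a <= n)%N -> (b <= n)%N -> a != b -> (inord a : 'I_n.+1) != inord b.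
Proof. by move=> ha hb hab; rewrite -val_eqE /= !inordK. Qed.

Lemma Edelta (F : fieldType) N (a b c : 'I_N) : a != b -> b != c -> a != c ->
  (delta_mx a a + delta_mx b b) *m (delta_mx b b + delta_mx c c) = delta_mx b b :> 'M[F]_N.
Proof.
move=> ab bc ac.
rewrite mulmxDl !mulmxDr !mul_delta_mx_cond eqxx (negbTE ab) (negbTE bc) (negbTE ac).
by rewrite /= !mulr0n mulr1n !add0r !addr0.
Qed.

Lemma Lmx_col0 (F : fieldType) n k (X : 'M[F]_2) (l : 'I_n.+1) : (k.+1 <= n)%N ->
  Lmx n k.+1 X l (inord k) = if (l == k :> nat) then X 0 0 else if (l == k.+1 :> nat) then X 1 0 else 0.
Proof.
move=> kn; rewrite mxE /= inordK; last lia.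
rewrite subnn inord0_2 leqnn leqnSn /= andbT.
case: (eqVneq (l : nat) k) => [->|h1]; first by rewrite leqnn leqnSn subnn inord0_2.
case: (eqVneq (l : nat) k.+1) => [->|h2]; first by rewrite leqnSn leqnn subSnn inord1_2.
have -> : ((k <= l) && (l <= k.+1))%N = false by lia.
rewrite ord_eq_nat inordK; last lia.
by rewrite (negbTE h1).
Qed.

Lemma Lmx_col1 (F : fieldType) n k (X : 'M[F]_2) (l : 'I_n.+1) : (k.+1 <= n)%N ->
  Lmx n k.+1 X l (inord k.+1) = if (l == k :> nat) then X 0 1 else if (l == k.+1 :> nat) then X 1 1 else 0.
Proof.
move=> kn; rewrite mxE /= inordK; last lia.
rewrite subSnn inord1_2 leqnn leqnSn /= andbT.
case: (eqVneq (l : nat) k) => [->|h1]; first by rewrite leqnn leqnSn subnn inord0_2.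
case: (eqVneq (l : nat) k.+1) => [->|h2]; first by rewrite leqnSn leqnn subSnn inord1_2.
have -> : ((k <= l) && (l <= k.+1))%N = false by lia.
rewrite ord_eq_nat inordK; last lia.
by rewrite (negbTE h2).
Qed.

Lemma part2 (F : fieldType) n (S R G : 'M[F]_2) (t : F) :
  (3 <= n)%N -> R *m S = t%:M -> t != 1 -> S 0 0 = 0 -> S 1 1 = 0 -> S 0 1 != 0 -> S 1 0 != 0 ->
  forall W : 'M[F]_(n.+1), (W <= (pid_mx n : 'M[F]_(n.+1)))%MS ->
  (forall M, gen_by (tvb_gen_images n S R G) M -> mx_invariant W M) ->
  (W == (0 : 'M[F]_(n.+1)))%MS || (W == (pid_mx n : 'M[F]_(n.+1)))%MS.
Proof.
move=> n3 RS t1 S00 S11 S01 S10 W Wp HW.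
pose cl (A : 'M[F]_n.+1) := (W *m A <= W)%MS.
have clT : forall M, gen_by (tvb_gen_images n S R G) M -> cl M^T := HW.
have clD : forall A B, cl A -> cl B -> cl (A + B).
  by move=> A B hA hB; rewrite /cl mulmxDr addmx_sub.
have clZ : forall a A, cl A -> cl (a *: A).
  by move=> a A hA; rewrite /cl -scalemxAr scalemx_sub.
have clM : forall A B, cl A -> cl B -> cl (A *m B).
  move=> A B hA hB; rewrite /cl mulmxA; exact: submx_trans (submxMr B hA) hB.
have cl1 : cl 1%:M by rewrite /cl mulmx1.
have clN : forall A, cl A -> cl (- A).
  by move=> A hA; rewrite -scaleN1r; apply: clZ.
have genP : forall g, tvb_gen_images n S R G g -> gen_by (tvb_gen_images n S R G) g.
  by move=> g hg; have := gen_by_mul hg (gen_by1 _); rewrite mulmx1.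
have genS : forall k, (1 <= k)%N -> (k <= n.-1)%N -> gen_by (tvb_gen_images n S R G) (Lmx n k S).
  by move=> k k1 kn; apply: genP; left; exists k; split => //; left.
pose E (j : nat) : 'M[F]_n.+1 := delta_mx (inord j) (inord j).
have clP : forall k, (1 <= k)%N -> (k <= n.-1)%N -> cl (E k.-1 + E k).
  move=> k k1 kn.
  have hg : gen_by (tvb_gen_images n S R G) (Lmx n k R *m (Lmx n k S *m 1%:M)).
    apply: gen_by_mul; first by left; exists k; split => //; right.
    apply: gen_by_mul (gen_by1 _); by left; exists k; split => //; left.
  have := clT _ hg; rewrite mulmx1 LmxM; last by apply/andP; split => //; lia.
  rewrite RS trmx_Lmx tr_scalar_mx Lmx_scalar; last by apply/andP; split => //; lia.
  move=> hM; have := clZ ((t - 1)^-1) _ (clD _ _ hM (clN _ cl1)).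
  rewrite addrAC subrr add0r scalerA mulVf ?scale1r //.
  by rewrite subr_eq0.
have clE : forall j, (j < n)%N -> cl (E j).
  move=> j jn.
  have nq : forall a b, (a <= n)%N -> (b <= n)%N -> a != b -> (inord a : 'I_n.+1) != inord b.
    exact: inord_neq.
  case/orP: (orbN (j == 0)%N) => [/eqP -> | j0].
    have := clD _ _ (clP 1%N isT ltac:(lia)) (clN _ (clM _ _ (clP 1%N isT ltac:(lia)) (clP 2%N isT ltac:(lia)))).
    rewrite /E /= (@Edelta _ _ (inord 0) (inord 1) (inord 2)) ?nq //; try lia.
    by rewrite addrK.
  case/orP: (orbN (j == n.-1)%N) => [/eqP -> | j1].
    have h1 : (1 <= n.-1)%N by lia.
    have h2 : (1 <= n.-1.-1)%N by lia.
    have := clD _ _ (clP n.-1 h1 (leqnn _)) (clN _ (clM _ _ (clP n.-1.-1 h2 ltac:(lia)) (clP n.-1 h1 (leqnn _)))).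
    rewrite /E (@Edelta _ _ (inord n.-1.-1.-1) (inord n.-1.-1) (inord n.-1)) ?nq //; try lia.
    by rewrite addrAC subrr add0r.
  have := clM _ _ (clP j ltac:(lia) ltac:(lia)) (clP j.+1 ltac:(lia) ltac:(lia)).
  rewrite /E /= (@Edelta _ _ (inord j.-1) (inord j) (inord j.+1)) ?nq //; lia.
pose e (j : nat) : 'rV[F]_n.+1 := delta_mx 0 (inord j).
have spreadU : forall j, (j.+1 < n)%N -> (e j <= W)%MS -> (e j.+1 <= W)%MS.
  move=> j jn h.
  have hc := clT _ (genS j.+1 isT ltac:(lia)).
  have h2 := submx_trans (submxMr (Lmx n j.+1 S)^T h) hc.
  have eq : e j *m (Lmx n j.+1 S)^T = S 1 0 *: e j.+1.
    rewrite -rowE; apply/rowP => l; rewrite [LHS]mxE [LHS]mxE Lmx_col0; last lia.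
    rewrite /e !mxE.
    rewrite eqxx /= ord_eq_nat inordK; last lia.
    case: (eqVneq (l : nat) j) => [->|h1]; first by rewrite ltn_eqF // mulr0 S00.
    by case: (l == j.+1 :> nat); rewrite ?mulr1 ?mulr0.
  move: h2; rewrite eq => h2; have := scalemx_sub (S 1 0)^-1 h2.
  by rewrite scalerA mulVf // scale1r.
have spreadD : forall j, (j.+1 < n)%N -> (e j.+1 <= W)%MS -> (e j <= W)%MS.
  move=> j jn h.
  have hc := clT _ (genS j.+1 isT ltac:(lia)).
  have h2 := submx_trans (submxMr (Lmx n j.+1 S)^T h) hc.
  have eq : e j.+1 *m (Lmx n j.+1 S)^T = S 0 1 *: e j.
    rewrite -rowE; apply/rowP => l; rewrite [LHS]mxE [LHS]mxE Lmx_col1; last lia.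
    rewrite /e !mxE.
    rewrite eqxx /= ord_eq_nat inordK; last lia.
    case: (l == j :> nat); first by rewrite mulr1.
    rewrite mulr0.
    by case: (l == j.+1 :> nat); rewrite ?S11.
  move: h2; rewrite eq => h2; have := scalemx_sub (S 0 1)^-1 h2.
  by rewrite scalerA mulVf // scale1r.
case/orP: (orbN (W == 0)) => [/eqP -> | W0]; first by rewrite /= submx_refl.
have [[i j0] /= Hij] : exists ij : 'I_n.+1 * 'I_n.+1, W ij.1 ij.2 != 0.
  case: (pickP (fun ij : 'I_n.+1 * 'I_n.+1 => W ij.1 ij.2 != 0)) => [ij hij|H]; first by exists ij.
  exfalso; move/negP: W0; apply; apply/eqP/matrixP => a b'; rewrite mxE.
  by move: (H (a, b')) => /= /negbFE /eqP.
have Wn : forall a, W a ord_max = 0.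
  move=> a; case/submxP: (Wp) => D ->; rewrite mxE big1 // => l _; rewrite mxE /=.
  have -> : ((l == n :> nat) && (l < n))%N = false by lia.
  by rewrite mulr0.
have j0n : (j0 < n)%N.
  case: (ltnP j0 n) => // h.
  have e0 : j0 = ord_max by apply: val_inj => /=; have := ltn_ord j0; lia.
  by rewrite e0 Wn eqxx in Hij.
have ej0 : (e j0 <= W)%MS.
  have h := submx_trans (submxMr (E j0) (row_sub i W)) (clE j0 j0n).
  have eq : row i W *m E j0 = W i j0 *: e j0.
    rewrite /E /e !inord_val; apply/rowP => l; rewrite !mxE (@sum1 _ _ _ j0); last first.
      by move=> m hm; rewrite !mxE (negbTE hm) mulr0.
    by rewrite !mxE !eqxx.
  move: h; rewrite eq => h; have := scalemx_sub (W i j0)^-1 h.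
  by rewrite scalerA mulVf // scale1r.
have all : forall j, (j < n)%N -> (e j <= W)%MS.
  have up : forall d, (j0 + d < n)%N -> (e (j0 + d)%N <= W)%MS.
    elim=> [|d IH] h; first by rewrite addn0.
    rewrite addnS; apply: spreadU; first by rewrite -addnS.
    apply: IH; lia.
  have down : forall d, (d <= j0)%N -> (e (j0 - d)%N <= W)%MS.
    elim=> [|d IH] h; first by rewrite subn0.
    apply: spreadD; first lia.
    have -> : ((j0 - d.+1).+1 = j0 - d)%N by lia.
    apply: IH; lia.
  move=> j jn; case: (leqP j0 j) => hj.
    have -> : j = (j0 + (j - j0))%N by lia.
    apply: up; lia.
  have -> : j = (j0 - (j0 - j))%N by lia.
  apply: down; lia.
apply/orP; right; apply/andP; split => //.
apply/row_subP => a; case: (ltnP a n) => ha.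
  have -> : row a (pid_mx n) = e a.
    apply/rowP => l; rewrite !mxE eqxx /= ord_eq_nat inordK; last lia.
    by rewrite ha andbT eq_sym.
  exact: all.
have -> : row a (pid_mx n : 'M[F]_n.+1) = 0 :> 'rV[F]_n.+1.
  by apply/rowP => l; rewrite !mxE ltnNge ha andbF.
exact: sub0mx.
Qed.

Unset Implicit Arguments. Set Strict Implicit.

Theorem theorem3p7 (R : realType) (n i : nat) (b c x sb sc : complex R) :
  (3 <= n)%N -> (1 <= i <= 7)%N ->
  b != 0 -> c != 0 -> x != 0 -> sb ^+ 2 = b -> sc ^+ 2 = c ->
  (forall M, zeta_image n i b c x sb sc M ->
     mx_invariant (delta_mx 0 ord_max : 'rV[complex R]_(n.+1)) M
     /\ mx_invariant (pid_mx n : 'M[complex R]_(n.+1)) M)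
  /\ ((i <= 4)%N -> b * c != 1 ->
      forall W : 'M[complex R]_(n.+1),
        (W <= (pid_mx n : 'M[complex R]_(n.+1)))%MS ->
        (forall M, zeta_image n i b c x sb sc M -> mx_invariant W M) ->
        (W == (0 : 'M[complex R]_(n.+1)))%MS || (W == (pid_mx n : 'M[complex R]_(n.+1)))%MS).
Proof.
move=> n3 i17 b0 c0 x0 sb2 sc2.
have hG : forall j, (zeta_data j b c x sb sc).2 0 1 = 0 /\ (zeta_data j b c x sb sc).2 1 0 = 0
   /\ (zeta_data j b c x sb sc).2 1 1 = 1.
  by move=> j; case: j => [|[|[|[|[|[|[|j]]]]]]]; rewrite /= !mxE.
split.
  move=> M; rewrite /zeta_image.
  case E: (zeta_data i b c x sb sc) => [[Sm Rm] Gm].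
  have := hG i; rewrite E /= => -[g01 [g10 g11]].
  by apply: part1 => //; lia.
move=> i4 bc1 W Wp.
have sb0 : sb != 0 by apply: contraNneq b0 => h; rewrite -sb2 h expr0n.
have sc0 : sc != 0 by apply: contraNneq c0 => h; rewrite -sc2 h expr0n.
have tm : - (sb * sc) != 1.
  apply: contra bc1 => /eqP h; have e : sb * sc = -1 by rewrite -h opprK.
  by rewrite -sb2 -sc2 -exprMn e sqrrN expr1n.
have tp : sb * sc != 1.
  apply: contra bc1 => /eqP h.
  by rewrite -sb2 -sc2 -exprMn h expr1n.
have : i = 1%N \/ i = 2%N \/ i = 3%N \/ i = 4%N by lia.
case=> [->|[->|[->|->]]]; rewrite /zeta_image /= => HW.
{ apply: (@part2 _ n _ _ _ (- (sb * sc)) n3 _ _ _ _ _ _ W Wp HW) => //; try by rewrite mxE.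
  apply/matrixP => p q; rewrite !mxE !big_ord_recl big_ord0 !mxE.
  rewrite -sb2 -sc2; case: p => [[|[|//]] hp]; case: q => [[|[|//]] hq] /=.
  all: rewrite ?mulr1n ?mulr0n ?mul0r ?mulr0 ?addr0 ?add0r ?mulNr //.
  all: rewrite expr2 mulrA divfK //; by rewrite mulrC. }
{ apply: (@part2 _ n _ _ _ (sb * sc) n3 _ _ _ _ _ _ W Wp HW) => //; try by rewrite mxE.
  apply/matrixP => p q; rewrite !mxE !big_ord_recl big_ord0 !mxE.
  rewrite -sb2 -sc2; case: p => [[|[|//]] hp]; case: q => [[|[|//]] hq] /=.
  all: rewrite ?mulr1n ?mulr0n ?mul0r ?mulr0 ?addr0 ?add0r ?mulNr //.
  all: rewrite expr2 mulrA divfK //; by rewrite mulrC. }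
{ apply: (@part2 _ n _ _ _ (- (sb * sc)) n3 _ _ _ _ _ _ W Wp HW) => //; try by rewrite mxE.
  apply/matrixP => p q; rewrite !mxE !big_ord_recl big_ord0 !mxE.
  rewrite -sb2 -sc2; case: p => [[|[|//]] hp]; case: q => [[|[|//]] hq] /=.
  all: rewrite ?mulr1n ?mulr0n ?mul0r ?mulr0 ?addr0 ?add0r ?mulNr //.
  all: rewrite expr2 mulrA divfK //; by rewrite mulrC. }
{ apply: (@part2 _ n _ _ _ (sb * sc) n3 _ _ _ _ _ _ W Wp HW) => //; try by rewrite mxE.
  apply/matrixP => p q; rewrite !mxE !big_ord_recl big_ord0 !mxE.
  rewrite -sb2 -sc2; case: p => [[|[|//]] hp]; case: q => [[|[|//]] hq] /=.
  all: rewrite ?mulr1n ?mulr0n ?mul0r ?mulr0 ?addr0 ?add0r ?mulNr //.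
  all: rewrite expr2 mulrA divfK //; by rewrite mulrC. }
Qed.
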